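(* Let $G$ be a circulant graph with an odd number of vertices and let $n \ge 1$. Then $K_{n,n} \otimes G$ is a circulant graph.
   Context: Graphs have no multiple edges but may have loops. The tensor product $G \otimes H$ of graphs $G$ and $H$ has vertex set $V(G)\times V(H)$, with $(g,h)$ adjacent to $(g',h')$ if and only if $g$ is adjacent to $g'$ in $G$ and $h$ is adjacent to $h'$ in $H$. $K_{n,n}$ denotes the complete bipartite graph with both parts of size $n$. For an integer $N\ge 1$ and a set $S$ of integers, the circulant graph $C_NS$ has vertex set $\{0,1,\dots,N-1\}$, with $i$ adjacent to $j$ if and only if $i-j \equiv \pm s \pmod N$ for some $s\in S$. A graph is circulant if it is isomorphic to some $C_NS$ (this includes disconnected graphs); equivalently, if it has an automorphism that permutes all its vertices in a single cycle. *)

(* Defs.v *)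
From mathcomp Require Import all_boot all_order all_algebra.
Set Implicit Arguments. Unset Strict Implicit. Unset Printing Implicit Defensive.
Import GRing.Theory Num.Theory.

(* A graph (no multiple edges, loops allowed) on a finite vertex type V is an
   adjacency relation E : V -> V -> Prop. *)

Definition tensor (V W : finType) (E : V -> V -> Prop) (F : W -> W -> Prop)
  : (V * W)%type -> (V * W)%type -> Prop :=
  fun p q => E p.1 q.1 /\ F p.2 q.2.

Definition Knn (n : nat) : ('I_n + 'I_n)%type -> ('I_n + 'I_n)%type -> Prop :=
  fun x y => match x, y with
             | inl _, inr _ => True
             | inr _, inl _ => True
             | _, _ => False
             end.

Definition circ_adj (N : nat) (S : int -> Prop) (i j : 'I_N) : Prop :=
  exists s, S s /\
    (((i%:Z - j%:Z) = s %[mod N%:Z])%Z \/ ((i%:Z - j%:Z) = - s %[mod N%:Z])%Z).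

Definition is_circulant (V : finType) (E : V -> V -> Prop) : Prop :=
  exists (N : nat) (S : int -> Prop), (0 < N)%N /\
    exists f : V -> 'I_N, bijective f /\
      forall x y, E x y <-> circ_adj S (f x) (f y).

(* Main.v *)
Require Import Defs.
From mathcomp Require Import all_boot all_order all_algebra.
From mathcomp Require Import zify ring.
Import GRing.Theory Num.Theory.
Local Open Scope ring_scope.

Definition P (N : nat) (S : int -> Prop) (x y : int) : Prop :=
  exists s, S s /\ ((x - y = s %[mod N%:Z])%Z \/ (x - y = - s %[mod N%:Z])%Z).

Lemma emod (m x y : int) : (x = y %[mod m])%Z <-> (m %| x - y)%Z.
Proof.
split => [/eqP|H]; first by rewrite eqz_mod_dvd.
by apply/eqP; rewrite eqz_mod_dvd.
Qed.

Lemma dvlin (m a b c : int) (c1 c2 c3 : int) (x : int) :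
  (m %| a)%Z -> (m %| b)%Z -> (m %| c)%Z -> x = c1 * a + c2 * b + c3 * c ->
  (m %| x)%Z.
Proof.
move=> ha hb hc ->.
by rewrite !rpredD // dvdz_mull.
Qed.

Definition Tset (M : nat) (S : int -> Prop) (t : int) : Prop :=
  (t = 1 %[mod 2])%Z /\ exists s, S s /\ ((t = s %[mod M%:Z])%Z \/ (t = - s %[mod M%:Z])%Z).

Lemma key (M N : nat) (S : int -> Prop) (k1 k2 v1 v2 : nat) (a1 a2 : bool) :
  (M%:Z %| N%:Z)%Z -> (2 %| N%:Z)%Z ->
  (M%:Z %| (k1%:Z - k2%:Z) - (v1%:Z - v2%:Z))%Z ->
  (2 %| (k1%:Z - k2%:Z) - ((a1 : nat)%:Z - (a2 : nat)%:Z))%Z ->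
  P N (Tset M S) k1 k2 <-> (a1 != a2) /\ P M S v1 v2.
Proof.
move=> hMN h2N.
set D := k1%:Z - k2%:Z; set e := v1%:Z - v2%:Z.
set A := (a1 : nat)%:Z - (a2 : nat)%:Z.
move=> hM h2.
have h22 : (2 %| 2)%Z by [].
split.
- move=> [t [[/emod Tt1 [s [Ss Hs]]] Ht]].
  have Ht' : (N%:Z %| D - t)%Z \/ (N%:Z %| D + t)%Z.
    case: Ht => /emod H; [left|right] => //.
    by rewrite -[t]opprK.
  have Hs' : (M%:Z %| t - s)%Z \/ (M%:Z %| t + s)%Z.
    case: Hs => /emod H; [left|right] => //.
    by rewrite -[s]opprK.
  split.
  + have hp : (2 %| A - 1)%Z \/ (2 %| A + 1)%Z.
      case: Ht' => H; have H2 := dvdz_trans h2N H.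
      * left; apply: (@dvlin _ (D - A) (D - t) (t - 1) (-1) 1 1 _ h2 H2 Tt1); rewrite ?/D ?/e ?/A; ring.
      * right; apply: (@dvlin _ (D - A) (D + t) (t - 1) (-1) 1 (-1) _ h2 H2 Tt1); rewrite ?/D ?/e ?/A; ring.
    move: hp; rewrite /A => hp; clear -hp; case: a1 hp; case: a2 => //= hp; by case: hp => /dvdzP [q Hq]; lia.
  + exists s; split => //.
    case: Ht' => H; have HM := dvdz_trans hMN H; case: Hs' => H'.
    * left; apply/emod; apply: (@dvlin _ _ _ _ (-1) 1 1 _ hM HM H'); rewrite ?/D ?/e ?/A; ring.
    * right; apply/emod; apply: (@dvlin _ _ _ _ (-1) 1 1 _ hM HM H'); rewrite ?/D ?/e ?/A; ring.
    * right; apply/emod; apply: (@dvlin _ _ _ _ (-1) 1 (-1) _ hM HM H'); rewrite ?/D ?/e ?/A; ring.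
    * left; apply/emod; apply: (@dvlin _ _ _ _ (-1) 1 (-1) _ hM HM H'); rewrite ?/D ?/e ?/A; ring.
- move=> [hne [s [Ss Hs]]].
  exists D; split; last by left; apply/emod; rewrite subrr dvdz0.
  split.
  + apply/emod.
    have {h2}h2 : (2 %| D - ((a1:nat)%:Z - (a2:nat)%:Z))%Z by exact h2.
    clear A; move: hne h2; case: a1; case: a2 => //= _ h2.
    * apply: (@dvlin _ _ _ _ 1 (-1) 0 _ h2 h22 h22); rewrite ?/D ?/e ?/A; ring.
  + exists s; split => //.
    case: Hs => /emod H.
    * left; apply/emod; apply: (@dvlin _ _ _ _ 1 1 0 _ hM H (dvdz0 _)); rewrite ?/D ?/e ?/A; ring.
    * right; apply/emod; apply: (@dvlin _ _ _ _ 1 1 0 _ hM H (dvdz0 _)); rewrite ?/D ?/e ?/A; ring.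
Qed.

Definition side (n : nat) (p : ('I_n + 'I_n)%type) : bool :=
  match p with inl _ => false | inr _ => true end.
Definition idx (n : nat) (p : ('I_n + 'I_n)%type) : nat :=
  match p with inl i => i | inr i => i end.

Arguments side {n}. Arguments idx {n}.

Lemma idx_lt n (p : 'I_n + 'I_n) : (idx p < n)%N.
Proof. by case: p => i /=. Qed.

Lemma Knn_side n (p q : 'I_n + 'I_n) : Knn p q <-> side p != side q.
Proof. by case: p => i; case: q => j. Qed.

Lemma side_idx_inj n (p q : 'I_n + 'I_n) : side p = side q -> idx p = idx q -> p = q.
Proof.
case: p => i; case: q => j //= _ H; by rewrite (val_inj H).
Qed.


Lemma jbound (n i : nat) (b : bool) : (i < n)%N -> (2 * i + b < 2 * n)%N.
Proof. case: b => /=; lia. Qed.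

Lemma bound (v M J n : nat) : (v < M)%N -> (J < 2 * n)%N -> (v + M * J < 2 * n * M)%N.
Proof.
move=> h1 h2.
have h3 : (M * J.+1 <= M * (2 * n))%N by rewrite leq_mul2l h2 orbT.
rewrite mulnS in h3; rewrite [(2 * n * M)%N]mulnC; lia.
Qed.

Lemma lin_dvd (M v1 v2 J1 J2 : nat) :
  (M%:Z %| ((v1 + M * J1)%N%:Z - (v2 + M * J2)%N%:Z) - (v1%:Z - v2%:Z))%Z.
Proof.
apply/dvdzP; exists (J1%:Z - J2%:Z); rewrite !PoszD !PoszM; ring.
Qed.

Lemma parity_dvd (k1 k2 : nat) :
  (2 %| (k1%:Z - k2%:Z) - ((odd k1 : nat)%:Z - (odd k2 : nat)%:Z))%Z.
Proof.
move: (odd k1) (k1./2) (odd_double_half k1) => b1 h1 <-.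
move: (odd k2) (k2./2) (odd_double_half k2) => b2 h2 <-.
apply/dvdzP; exists (h1%:Z - h2%:Z); rewrite !PoszD -!muln2 !PoszM; ring.
Qed.

Theorem theorem8 (V : finType) (E : V -> V -> Prop) (n : nat) :
  odd #|V| -> (0 < n)%N -> is_circulant E ->
  is_circulant (tensor (@Knn n) E).
Proof.
move=> hodd hn [M [S [HM [f [fbij hE]]]]].
have cardV : #|V| = M by rewrite (bij_eq_card fbij) card_ord.
rewrite cardV in hodd.
pose j (q : (('I_n + 'I_n) * V)%type) : nat :=
  (2 * idx q.1 + (side q.1 (+) odd (f q.2)))%N.
pose lab (q : (('I_n + 'I_n) * V)%type) : nat := (f q.2 + M * j q)%N.
pose N := (2 * n * M)%N.
have jlt q : (j q < 2 * n)%N by apply: jbound; apply: idx_lt.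
have labP q : (lab q < N)%N by apply: bound; [apply: ltn_ord | apply: jlt].
pose g q : 'I_N := Ordinal (labP q).
have labmod q : (lab q %% M = f q.2)%N by rewrite /lab mulnC addnC modnMDl modn_small.
have labdiv q : (lab q %/ M = j q)%N by rewrite /lab mulnC addnC divnMDl // divn_small // addn0.
have labodd q : odd (lab q) = side q.1.
  rewrite /lab /j oddD oddM hodd /= oddD oddM /=.
  by case: (side q.1); case: (odd (f q.2)).
have ginj : injective g.
  move=> [p1 x1] [p2 x2] /(congr1 val) /= H.
  have hx : f x1 = f x2.
    apply: val_inj; have := labmod (p1, x1); have := labmod (p2, x2).
    rewrite H /= => -> //.
  have ex : x1 = x2 by apply: (bij_inj fbij).
  have hs : side p1 = side p2.
    have := labodd (p1, x1); have := labodd (p2, x2); rewrite H /= => -> //.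
  have hj : j (p1, x1) = j (p2, x2).
    have := labdiv (p1, x1); have := labdiv (p2, x2); rewrite H /= => -> //.
  move: hj; rewrite /j /= hx hs => hj.
  rewrite ex (@side_idx_inj _ p1 p2) //; clear -hj; lia.
have gbij : bijective g.
  apply: (inj_card_bij ginj).
  by rewrite card_ord card_prod card_sum card_ord cardV /N; clear; lia.
exists N, (Tset M S); split; first by rewrite /N; rewrite !muln_gt0 hn HM.
exists g; split => //.
move=> [p1 x1] [p2 x2].
rewrite /tensor /= Knn_side hE.
change (circ_adj S (f x1) (f x2)) with (P M S (f x1) (f x2)).
change (circ_adj (Tset M S) (g (p1, x1)) (g (p2, x2))) with
  (P N (Tset M S) (lab (p1, x1)) (lab (p2, x2))).
rewrite (@key M N S (lab (p1, x1)) (lab (p2, x2)) (f x1) (f x2) (side p1) (side p2)).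
- by [].
- by apply/dvdzP; exists (2 * n)%:Z; rewrite /N -PoszM mulnC.
- by apply/dvdzP; exists (n * M)%:Z; rewrite /N -PoszM; congr Posz; clear; lia.
- exact: (@lin_dvd M (f x1) (f x2) (j (p1, x1)) (j (p2, x2))).
- rewrite -(labodd (p1, x1)) -(labodd (p2, x2)); exact: parity_dvd.
Qed.
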